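(* For the system $\dot x=Ax+ub$ with $A=\begin{pmatrix}0&1&0\\-1&0&1\\0&0&0\end{pmatrix}$, $b=(0,0,1)^T$, $x(0)=0$, and any $\gamma>0$: there is no control of the form $u(t)=(-1)^{j-1}$ on $(t_{j-1},t_j)$, $j=1,\dots,2\rho$ (i.e. with an odd number $2\rho-1$ of switchings, $\rho\ge1$), nor its negative $-u(t)$, whose interval lengths $\tau_k=t_k-t_{k-1}$ all lie in $(0,2\pi)$, which satisfies $\tau_k+\tau_{k+1}=2\pi$ for all interior consecutive intervals $2\le k\le 2\rho-2$, and which steers the system to $(\gamma,0,\gamma)$. Likewise, no control $-u(t)$ with $u$ of the form $(-1)^{j-1}$ on $(t_{j-1},t_j)$, $j=1,\dots,2\rho+1$, satisfying $\tau_k\in(0,2\pi)$, $\tau_k+\tau_{k+1}=2\pi$ for $2\le k\le 2\rho-1$, and $\tau_{2\rho}+\tau_{2\rho+1}\le2\pi$, steers the system to $(\gamma,0,\gamma)$.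
   Context: These are the structural constraints that the switching function $\Phi(t)=c-A_0\sin(t+\theta)$ of a Pontryagin extremal imposes on bang-bang controls with constant-control intervals of length less than $2\pi$. *)

(* Defs.v *)
From Stdlib Require Import Reals Lra Lia.
Open Scope R_scope.

Definition cont_on_closed (f : R -> R) (a b : R) : Prop :=
  forall s, a <= s <= b ->
  forall eps, 0 < eps -> exists delta, 0 < delta /\
    forall s', a <= s' <= b -> Rabs (s' - s) < delta -> Rabs (f s' - f s) < eps.

Definition tau (t : nat -> R) (k : nat) : R := t k - t (k - 1)%nat.

(* The control equals sg * (-1)^(j-1) on (t_{j-1}, t_j), j = 1..N.
   (x1,x2,x3) is the (Caratheodory) solution of
     x1' = x2,  x2' = -x1 + x3,  x3' = u,   x(0) = 0
   on [0, t N]: continuous on [0, t N], satisfying the ODE on each open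
   interval of constancy of the control. *)
Definition is_trajectory (N : nat) (t : nat -> R) (sg : R)
    (x1 x2 x3 : R -> R) : Prop :=
  x1 0 = 0 /\ x2 0 = 0 /\ x3 0 = 0 /\
  cont_on_closed x1 0 (t N) /\ cont_on_closed x2 0 (t N) /\
  cont_on_closed x3 0 (t N) /\
  forall j : nat, (1 <= j <= N)%nat -> forall s, t (j - 1)%nat < s < t j ->
    derivable_pt_lim x1 s (x2 s) /\
    derivable_pt_lim x2 s (- x1 s + x3 s) /\
    derivable_pt_lim x3 s (sg * (-1) ^ (j - 1)).

Definition steers_to (N : nat) (t : nat -> R) (sg g : R) : Prop :=
  exists x1 x2 x3 : R -> R,
    is_trajectory N t sg x1 x2 x3 /\
    x1 (t N) = g /\ x2 (t N) = 0 /\ x3 (t N) = g.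

(* Main.v *)
Require Import Defs.
From Stdlib Require Import Reals Lra Lia Nsatz.
Open Scope R_scope.

Lemma const_open (g : R -> R) a b :
  (forall s, a < s < b -> derivable_pt_lim g s 0) ->
  forall x y, a < x < b -> a < y < b -> g x = g y.
Proof.
  intros Hd.
  assert (K : forall x y, a < x < b -> a < y < b -> x < y -> g x = g y).
  { intros x y Hx Hy Hxy.
    destruct (MVT_cor2 g (fun _ => 0) x y Hxy) as [c [Hc _]].
    - intros c Hc. apply Hd. lra.
    - lra. }
  intros x y Hx Hy. destruct (Rtotal_order x y) as [H|[H|H]].
  - auto.
  - subst; auto.
  - symmetry; auto.
Qed.

Lemma endpoint (f F : R -> R) T a b c :
  0 <= a < b -> b <= T -> cont_on_closed f 0 T -> continuity_pt F c ->
  (forall s, a < s < b -> f s = F s) -> (c = a \/ c = b) -> f c = F c.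
Proof.
  intros Hab HbT Hf HF Heq Hc.
  destruct (Req_dec (f c) (F c)) as [Z|NZ]; [exact Z|exfalso].
  set (e := Rabs (f c - F c)).
  assert (He : 0 < e) by (apply Rabs_pos_lt; intro; apply NZ; lra).
  destruct (Hf c ltac:(destruct Hc; subst; lra) (e/2) ltac:(lra)) as [d1 [Hd1 H1]].
  destruct (HF (e/2) ltac:(lra)) as [d2 [Hd2 H2]].
  set (d := Rmin (Rmin d1 d2) (b - a)).
  assert (Hd : 0 < d) by (unfold d; repeat apply Rmin_glb_lt; lra).
  assert (Hdle : d <= d1 /\ d <= d2 /\ d <= b - a).
  { unfold d. pose proof (Rmin_l (Rmin d1 d2) (b-a)). pose proof (Rmin_r (Rmin d1 d2) (b-a)).
    pose proof (Rmin_l d1 d2). pose proof (Rmin_r d1 d2). lra. }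
  destruct Hdle as [Hdle1 [Hdle2 Hdle3]].
  set (s := if Rle_dec c a then a + d/2 else b - d/2).
  assert (Hs : a < s < b /\ Rabs (s - c) < d).
  { unfold s. destruct Hc as [Hc|Hc]; subst c; destruct (Rle_dec _ a).
    - split; [lra|]. rewrite Rabs_right; lra.
    - lra.
    - lra.
    - split; [lra|]. rewrite Rabs_left; lra. }
  destruct Hs as [Hs Hsc].
  assert (A1 : Rabs (f s - f c) < e/2).
  { apply H1; [lra|lra]. }
  assert (A2 : Rabs (F s - F c) < e/2).
  { change (R_dist (F s) (F c) < e/2). apply H2. split.
    - split; [exact I|]. intro E. rewrite <- E in Hsc. rewrite Rminus_diag, Rabs_R0 in Hsc. lra.
    - simpl. unfold R_dist. lra. }
  rewrite Heq in A1 by lra.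
  assert (e <= Rabs (f c - F s) + Rabs (F s - F c)).
  { unfold e. replace (f c - F c) with ((f c - F s) + (F s - F c)) by ring. apply Rabs_triang. }
  rewrite Rabs_minus_sym in A1. lra.
Qed.

Lemma ode_interval (f1 f2 f3 : R -> R) u a b T :
  0 <= a < b -> b <= T ->
  cont_on_closed f1 0 T -> cont_on_closed f2 0 T -> cont_on_closed f3 0 T ->
  (forall s, a < s < b -> derivable_pt_lim f1 s (f2 s) /\
     derivable_pt_lim f2 s (- f1 s + f3 s) /\ derivable_pt_lim f3 s u) ->
  f1 b - f3 b = cos (b - a) * (f1 a - f3 a) + sin (b - a) * (f2 a - u) /\
  f2 b - u = - sin (b - a) * (f1 a - f3 a) + cos (b - a) * (f2 a - u) /\
  f3 b = f3 a + u * (b - a).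
Proof.
  intros Hab HbT c1 c2 c3 Hd.
  set (g3 := (f3 - mult_real_fct u id)%F).
  set (h1 := ((f1 - f3) * cos - (f2 - fct_cte u) * sin)%F).
  set (h2 := ((f1 - f3) * sin + (f2 - fct_cte u) * cos)%F).
  assert (D3 : forall s, a < s < b -> derivable_pt_lim g3 s 0).
  { intros s Hs. destruct (Hd s Hs) as [d1 [d2 d3]].
    replace 0 with (u - u * 1) by ring.
    apply derivable_pt_lim_minus; [exact d3|].
    apply derivable_pt_lim_scal. apply derivable_pt_lim_id. }
  assert (D1 : forall s, a < s < b -> derivable_pt_lim h1 s 0).
  { intros s Hs. destruct (Hd s Hs) as [d1 [d2 d3]].
    assert (L := derivable_pt_lim_minus _ _ _ _ _
      (derivable_pt_lim_mult _ _ _ _ _ (derivable_pt_lim_minus _ _ _ _ _ d1 d3) (derivable_pt_lim_cos s))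
      (derivable_pt_lim_mult _ _ _ _ _ (derivable_pt_lim_minus _ _ _ _ _ d2 (derivable_pt_lim_const u s)) (derivable_pt_lim_sin s))).
    unfold h1. match type of L with derivable_pt_lim _ _ ?l => replace 0 with l end; [exact L|].
    unfold minus_fct, mult_fct, fct_cte. ring. }
  assert (D2 : forall s, a < s < b -> derivable_pt_lim h2 s 0).
  { intros s Hs. destruct (Hd s Hs) as [d1 [d2 d3]].
    assert (L := derivable_pt_lim_plus _ _ _ _ _
      (derivable_pt_lim_mult _ _ _ _ _ (derivable_pt_lim_minus _ _ _ _ _ d1 d3) (derivable_pt_lim_sin s))
      (derivable_pt_lim_mult _ _ _ _ _ (derivable_pt_lim_minus _ _ _ _ _ d2 (derivable_pt_lim_const u s)) (derivable_pt_lim_cos s))).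
    unfold h2. match type of L with derivable_pt_lim _ _ ?l => replace 0 with l end; [exact L|].
    unfold minus_fct, mult_fct, fct_cte. ring. }
  set (m := (a + b) / 2).
  assert (Hm : a < m < b) by (unfold m; lra).
  set (K := g3 m). set (C1 := h1 m). set (C2 := h2 m).
  assert (E : forall s, a < s < b ->
     f3 s = K + u * s /\ f1 s - f3 s = C1 * cos s + C2 * sin s /\
     f2 s - u = - C1 * sin s + C2 * cos s).
  { intros s Hs.
    assert (e3 : g3 s = K) by (apply (const_open g3 a b D3); auto).
    assert (e1 : h1 s = C1) by (apply (const_open h1 a b D1); auto).
    assert (e2 : h2 s = C2) by (apply (const_open h2 a b D2); auto).
    unfold g3, h1, h2, plus_fct, minus_fct, mult_fct, fct_cte, mult_real_fct, id in e1, e2, e3.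
    rewrite <- e1, <- e2, <- e3. pose proof (sin2_cos2 s) as P. unfold Rsqr in P.
    split; [ring|split; nsatz]. }
  set (F1 := fun s => K + u*s + C1 * cos s + C2 * sin s).
  set (F2 := fun s => u - C1 * sin s + C2 * cos s).
  set (F3 := fun s => K + u*s).
  assert (EF1 : forall s, a < s < b -> f1 s = F1 s).
  { intros s Hs. destruct (E s Hs) as [e3 [e1 e2]]. unfold F1. lra. }
  assert (EF2 : forall s, a < s < b -> f2 s = F2 s).
  { intros s Hs. destruct (E s Hs) as [e3 [e1 e2]]. unfold F2. lra. }
  assert (EF3 : forall s, a < s < b -> f3 s = F3 s).
  { intros s Hs. destruct (E s Hs) as [e3 [e1 e2]]. unfold F3. lra. }
  assert (CF1 : forall x, continuity_pt F1 x) by (intro; unfold F1; reg).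
  assert (CF2 : forall x, continuity_pt F2 x) by (intro; unfold F2; reg).
  assert (CF3 : forall x, continuity_pt F3 x) by (intro; unfold F3; reg).
  assert (A1 := endpoint f1 F1 T a b a Hab HbT c1 (CF1 a) EF1 (or_introl eq_refl)).
  assert (B1 := endpoint f1 F1 T a b b Hab HbT c1 (CF1 b) EF1 (or_intror eq_refl)).
  assert (A2 := endpoint f2 F2 T a b a Hab HbT c2 (CF2 a) EF2 (or_introl eq_refl)).
  assert (B2 := endpoint f2 F2 T a b b Hab HbT c2 (CF2 b) EF2 (or_intror eq_refl)).
  assert (A3 := endpoint f3 F3 T a b a Hab HbT c3 (CF3 a) EF3 (or_introl eq_refl)).
  assert (B3 := endpoint f3 F3 T a b b Hab HbT c3 (CF3 b) EF3 (or_intror eq_refl)).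
  unfold F1, F2, F3 in *.
  rewrite A1, B1, A2, B2, A3, B3, cos_minus, sin_minus.
  pose proof (sin2_cos2 a) as P. unfold Rsqr in P.
  split; [|split]; nsatz.
Qed.
Lemma sin_pos_open x : 0 < x < PI -> 0 < sin x.
Proof. intros [H1 H2]. apply sin_gt_0; lra. Qed.

Lemma part2_trig (r t1 a b : R): 1 <= r -> 0 < t1 < 2*PI -> 0 < a < 2*PI -> 0 < b -> a + b <= 2*PI ->
 cos t1 = 2*r*(1 - cos a) + cos (a+b) -> sin t1 = 2*r*sin a - sin (a+b) ->
 t1 + (r-1)*(2*PI - 2*a) - a + b < 0 -> False.
Proof.
  intros Hr Ht Ha Hb Hab HR HI HG.
  set (h := a/2) in *. set (S := (t1 + a + b)/2). set (D := (t1 - b)/2).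
  assert (Et1 : t1 = S + D - h) by (unfold S, D, h; field).
  assert (Ea : a = 2*h) by (unfold h; field).
  assert (Eab : a + b = S - D + h) by (unfold S, D, h; field).
  assert (Hh : 0 < h < PI) by (unfold h; lra).
  assert (Hsh : 0 < sin h) by (apply sin_pos_open; lra).
  assert (E1 : sin S * sin D = 0 /\ sin S * cos D = 2 * r * sin h).
  { clear Hsh Hh.
    rewrite Eab in HR, HI. rewrite Et1 in HR, HI. rewrite Ea in HR, HI.
    repeat rewrite ?cos_minus, ?cos_plus, ?sin_minus, ?sin_plus, ?cos_2a, ?sin_2a in HR.
    repeat rewrite ?cos_minus, ?cos_plus, ?sin_minus, ?sin_plus, ?cos_2a, ?sin_2a in HI.
    pose proof (sin2_cos2 S) as PS. pose proof (sin2_cos2 D) as PD. pose proof (sin2_cos2 h) as Ph.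
    unfold Rsqr in PS, PD, Ph.
    clear Et1 Ea Eab HG.
    split; nsatz. }
  destruct E1 as [E1 E2].
  assert (HD0 : D = 0).
  { assert (sin S <> 0).
    { intro Z. rewrite Z in E2. nra. }
    assert (sin D = 0).
    { apply Rmult_integral in E1. destruct E1; [contradiction|assumption]. }
    destruct (Rtotal_order D 0) as [Hlt|[Heq|Hgt]]; auto.
    - exfalso. assert (0 < sin (-D)) by (apply sin_pos_open; unfold D in *; lra).
      rewrite sin_neg in H1. lra.
    - exfalso. assert (0 < sin D) by (apply sin_pos_open; unfold D in *; lra). lra. }
  assert (Etb : t1 = b) by (unfold D in HD0; lra).
  rewrite HD0, cos_0 in E2.
  assert (ES : S = h + b) by (unfold S, h; lra).
  rewrite ES in E2.
  assert (Hs2 : sin (h + b) < 2 * sin h).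
  { destruct (Rle_dec h (PI/2)) as [Hle|Hgt].
    - assert (Hbh : b < h).
      { assert (0 <= (r-1)*(2*PI - 2*a)) by (apply Rmult_le_pos; unfold h in *; lra).
        unfold h in *. lra. }
      assert (Eq : sin (h + b) = 2 * sin h * cos b - sin (h - b))
        by (rewrite sin_plus, sin_minus; ring).
      assert (0 < sin (h - b)) by (apply sin_pos_open; lra).
      pose proof (COS_bound b). nra.
    - assert (Hbp : b < PI) by (unfold h in *; lra).
      assert (cos h < 0) by (apply cos_lt_0; lra).
      assert (0 < sin b) by (apply sin_pos_open; lra).
      rewrite sin_plus. pose proof (COS_bound b). nra. }
  nra.
Qed.

Lemma mono (N : nat) (t : nat -> R) : t 0%nat = 0 ->
  (forall k, (1 <= k <= N)%nat -> 0 < tau t k) ->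
  (forall j, (j <= N)%nat -> 0 <= t j) /\ (forall j, (j <= N)%nat -> t j <= t N).
Proof.
  intros H0 Ht. unfold tau in Ht.
  assert (A : forall d j, (j + d <= N)%nat -> t j <= t (j + d)%nat).
  { induction d as [|d IH]; intros j Hj.
    - rewrite Nat.add_0_r. lra.
    - specialize (IH j ltac:(lia)). specialize (Ht (j + S d)%nat ltac:(lia)).
      replace (j + S d - 1)%nat with (j + d)%nat in Ht by lia. lra. }
  split.
  - intros j Hj. specialize (A j 0%nat ltac:(lia)). simpl in A. lra.
  - intros j Hj. specialize (A (N - j)%nat j ltac:(lia)).
    replace (j + (N - j))%nat with N in A by lia. exact A.
Qed.

Lemma step N t sg x1 x2 x3 j :
  is_trajectory N t sg x1 x2 x3 -> (1 <= j <= N)%nat ->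
  0 <= t (j-1)%nat -> 0 < tau t j -> t j <= t N ->
  x1 (t j) - x3 (t j) = cos (tau t j) * (x1 (t (j-1)%nat) - x3 (t (j-1)%nat))
      + sin (tau t j) * (x2 (t (j-1)%nat) - sg * (-1)^(j-1)) /\
  x2 (t j) - sg * (-1)^(j-1) = - sin (tau t j) * (x1 (t (j-1)%nat) - x3 (t (j-1)%nat))
      + cos (tau t j) * (x2 (t (j-1)%nat) - sg * (-1)^(j-1)) /\
  x3 (t j) = x3 (t (j-1)%nat) + sg * (-1)^(j-1) * tau t j.
Proof.
  intros [_ [_ [_ [c1 [c2 [c3 Hd]]]]]] Hj H0 Ht HN. unfold tau in *.
  apply (ode_interval x1 x2 x3 (sg * (-1)^(j-1)) (t (j-1)%nat) (t j) (t N)); try lra; auto.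
Qed.

Lemma pair_alg sg W X Y W1 X1 Y1 W2 X2 Y2 a :
 sg*sg = 1 ->
 W1 = cos a * W + sin a * (X - sg * -1) ->
 X1 - sg * -1 = - sin a * W + cos a * (X - sg * -1) ->
 Y1 = Y + sg * -1 * a ->
 W2 = cos (2*PI - a) * W1 + sin (2*PI-a) * (X1 - sg * 1) ->
 X2 - sg * 1 = - sin (2*PI - a) * W1 + cos (2*PI-a) * (X1 - sg * 1) ->
 Y2 = Y1 + sg * 1 * (2*PI - a) ->
 sg*X2 = sg*X + 2*(1 - cos a) /\ sg*W2 = sg*W + 2*sin a /\ Y2 = Y + sg*(2*PI - 2*a).
Proof.
  intros Hs H1 H2 H3 H4 H5 H6.
  rewrite cos_minus, sin_minus, cos_2PI, sin_2PI in H4, H5.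
  pose proof (sin2_cos2 a) as P. unfold Rsqr in P.
  split; [|split]; nsatz.
Qed.

Lemma final1 sg W X b : sg*sg = 1 ->
  0 = cos b * W + sin b * (X - sg * -1) ->
  0 - sg * -1 = - sin b * W + cos b * (X - sg * -1) -> sg*X = cos b - 1.
Proof.
  intros Hs H1 H2. pose proof (sin2_cos2 b) as P. unfold Rsqr in P. nsatz.
Qed.

Lemma final2 sg W X Y W1 X1 Y1 a b g : sg*sg = 1 ->
 W1 = cos a * W + sin a * (X - sg * -1) ->
 X1 - sg * -1 = - sin a * W + cos a * (X - sg * -1) ->
 Y1 = Y + sg * -1 * a ->
 0 = cos b * W1 + sin b * (X1 - sg * 1) ->
 0 - sg * 1 = - sin b * W1 + cos b * (X1 - sg * 1) ->
 g = Y1 + sg * 1 * b ->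
 sg*W = sin (a+b) - 2 * sin a /\ sg*X + 1 = 2 * cos a - cos (a+b) /\ g = Y + sg*(b - a).
Proof.
  intros Hs H1 H2 H3 H4 H5 H6.
  rewrite sin_plus, cos_plus.
  pose proof (sin2_cos2 a) as P. unfold Rsqr in P.
  pose proof (sin2_cos2 b) as Q. unfold Rsqr in Q.
  split; [|split]; nsatz.
Qed.

Lemma cos_lt_1 x : 0 < x < 2*PI -> cos x < 1.
Proof.
  intros H. replace x with (2 * (x/2)) by field. rewrite cos_2a_sin.
  assert (0 < sin (x/2)) by (apply sin_pos_open; lra). nra.
Qed.

Lemma pow_odd m : (-1)^(2*m+1) = -1.
Proof. rewrite Nat.add_1_r. apply pow_1_odd. Qed.
Lemma pow_even m : (-1)^(2*m) = 1.
Proof. apply pow_1_even. Qed.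

Theorem mainTheorem8 (gamma : R) (hg : 0 < gamma) :
  (* odd number 2*rho - 1 of switchings, control u or -u *)
  (forall (rho : nat) (t : nat -> R) (sg : R),
     (1 <= rho)%nat ->
     (sg = 1 \/ sg = -1) ->
     t 0%nat = 0 ->
     (forall k, (1 <= k <= 2 * rho)%nat -> 0 < tau t k < 2 * PI) ->
     (forall k, (2 <= k <= 2 * rho - 2)%nat -> tau t k + tau t (k + 1) = 2 * PI) ->
     ~ steers_to (2 * rho) t sg gamma) /\
  (* even number 2*rho of switchings, control -u *)
  (forall (rho : nat) (t : nat -> R),
     (1 <= rho)%nat ->
     t 0%nat = 0 ->
     (forall k, (1 <= k <= 2 * rho + 1)%nat -> 0 < tau t k < 2 * PI) ->
     (forall k, (2 <= k <= 2 * rho - 1)%nat -> tau t k + tau t (k + 1) = 2 * PI) ->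
     tau t (2 * rho) + tau t (2 * rho + 1) <= 2 * PI ->
     ~ steers_to (2 * rho + 1) t (-1) gamma).
Proof.
  split.
  - intros rho t sg Hr Hsg H0 Ht Hc [x1 [x2 [x3 [Tr [F1 [F2 F3]]]]]].
    assert (Hs : sg * sg = 1) by (destruct Hsg; subst; ring).
    destruct (mono (2*rho) t H0 (fun k Hk => proj1 (Ht k Hk))) as [M0 M1].
    pose proof (fun j (Hj : (1 <= j <= 2*rho)%nat) => step _ t sg x1 x2 x3 j Tr Hj (M0 (j-1)%nat ltac:(lia)) (proj1 (Ht j Hj)) (M1 j ltac:(lia))) as ST.
    destruct Tr as [I1 [I2 [I3 _]]].
    assert (Cl : forall m, (m <= rho - 1)%nat -> sg * x2 (t (2*m+1)%nat) >= 1 - cos (tau t 1)).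
    { induction m as [|m IH]; intros Hm.
      - pose proof (ST 1%nat ltac:(lia)) as [_ [S2 _]]. simpl in S2. rewrite H0, I1, I2, I3 in S2.
        simpl. nra.
      - pose proof (ST (2*m+2)%nat ltac:(lia)) as [A1 [A2 A3]].
        pose proof (ST (2*m+3)%nat ltac:(lia)) as [B1 [B2 B3]].
        replace (2*m+2-1)%nat with (2*m+1)%nat in A1, A2, A3 by lia.
        replace (2*m+3-1)%nat with (2*(m+1))%nat in B1, B2, B3 by lia.
        rewrite pow_odd in A1, A2, A3. rewrite pow_even in B1, B2, B3.
        replace (2*(m+1))%nat with (2*m+2)%nat in B1, B2, B3 by lia.
        assert (Et : tau t (2*m+3)%nat = 2*PI - tau t (2*m+2)%nat).
        { pose proof (Hc (2*m+2)%nat ltac:(lia)) as E. replace (2*m+2+1)%nat with (2*m+3)%nat in E by lia. lra. }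
        rewrite Et in B1, B2, B3.
        destruct (pair_alg sg _ _ _ _ _ _ _ _ _ _ Hs A1 A2 A3 B1 B2 B3) as [P1 _].
        replace (2 * S m + 1)%nat with (2*m+3)%nat by lia.
        specialize (IH ltac:(lia)). pose proof (COS_bound (tau t (2*m+2)%nat)). nra. }
    pose proof (Cl (rho - 1)%nat ltac:(lia)) as C.
    pose proof (ST (2*rho)%nat ltac:(lia)) as [A1 [A2 A3]].
    replace (2*rho-1)%nat with (2*(rho-1)+1)%nat in A1, A2, A3 by lia.
    rewrite pow_odd in A1, A2, A3.
    rewrite F1, F3, Rminus_diag in A1. rewrite F2 in A2.
    pose proof (final1 sg _ _ _ Hs A1 A2) as E.
    pose proof (cos_lt_1 (tau t 1) (Ht 1%nat ltac:(lia))).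
    pose proof (COS_bound (tau t (2*rho)%nat)). lra.
  - intros rho t Hr H0 Ht Hc Hab [x1 [x2 [x3 [Tr [F1 [F2 F3]]]]]].
    set (sg := -1) in *.
    assert (Hs : sg * sg = 1) by (unfold sg; ring).
    destruct (mono (2*rho+1) t H0 (fun k Hk => proj1 (Ht k Hk))) as [M0 M1].
    pose proof (fun j (Hj : (1 <= j <= 2*rho+1)%nat) => step _ t sg x1 x2 x3 j Tr Hj (M0 (j-1)%nat ltac:(lia)) (proj1 (Ht j Hj)) (M1 j ltac:(lia))) as ST.
    destruct Tr as [I1 [I2 [I3 _]]].
    set (a := tau t 2).
    assert (Ch : forall m, (1 <= m <= rho)%nat -> tau t (2*m)%nat = a).
    { induction m as [|m IH]; intros Hm; [lia|].
      destruct (Nat.eq_dec m 0) as [->|Hm0]; [reflexivity|].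
      pose proof (Hc (2*m)%nat ltac:(lia)) as E1.
      pose proof (Hc (2*m+1)%nat ltac:(lia)) as E2.
      replace (2*m+1+1)%nat with (2 * S m)%nat in E2 by lia.
      rewrite IH in E1 by lia. lra. }
    assert (Cl : forall m, (m <= rho - 1)%nat ->
       sg * x2 (t (2*m+1)%nat) = 1 - cos (tau t 1) + 2 * INR m * (1 - cos a) /\
       sg * (x1 (t (2*m+1)%nat) - x3 (t (2*m+1)%nat)) = 2 * INR m * sin a - sin (tau t 1) /\
       x3 (t (2*m+1)%nat) = sg * (tau t 1 + INR m * (2*PI - 2*a))).
    { induction m as [|m IH]; intros Hm.
      - pose proof (ST 1%nat ltac:(lia)) as [S1 [S2 S3]]. simpl in S1, S2, S3.
        rewrite H0, I1, I2, I3 in S1. rewrite H0, I1, I2, I3 in S2. rewrite H0, I3 in S3.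
        simpl. unfold sg in *. split; [|split]; nra.
      - pose proof (ST (2*m+2)%nat ltac:(lia)) as [A1 [A2 A3]].
        pose proof (ST (2*m+3)%nat ltac:(lia)) as [B1 [B2 B3]].
        replace (2*m+2-1)%nat with (2*m+1)%nat in A1, A2, A3 by lia.
        replace (2*m+3-1)%nat with (2*(m+1))%nat in B1, B2, B3 by lia.
        rewrite pow_odd in A1, A2, A3. rewrite pow_even in B1, B2, B3.
        replace (2*(m+1))%nat with (2*m+2)%nat in B1, B2, B3 by lia.
        assert (Ea : tau t (2*m+2)%nat = a).
        { replace (2*m+2)%nat with (2*(m+1))%nat by lia. apply Ch. lia. }
        assert (Et : tau t (2*m+3)%nat = 2*PI - a).
        { pose proof (Hc (2*m+2)%nat ltac:(lia)) as E. replace (2*m+2+1)%nat with (2*m+3)%nat in E by lia. lra. }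
        rewrite Et in B1, B2, B3. rewrite Ea in A1, A2, A3.
        destruct (pair_alg sg _ _ _ _ _ _ _ _ _ _ Hs A1 A2 A3 B1 B2 B3) as [P1 [P2 P3]].
        replace (2 * S m + 1)%nat with (2*m+3)%nat by lia.
        specialize (IH ltac:(lia)). destruct IH as [J1 [J2 J3]].
        rewrite S_INR. split; [|split]; nra. }
    pose proof (Cl (rho - 1)%nat ltac:(lia)) as [C1 [C2 C3]].
    pose proof (ST (2*rho)%nat ltac:(lia)) as [A1 [A2 A3]].
    pose proof (ST (2*rho+1)%nat ltac:(lia)) as [B1 [B2 B3]].
    replace (2*rho-1)%nat with (2*(rho-1)+1)%nat in A1, A2, A3 by lia.
    replace (2*rho+1-1)%nat with (2*rho)%nat in B1, B2, B3 by lia.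
    rewrite pow_odd in A1, A2, A3. rewrite pow_even in B1, B2, B3.
    rewrite (Ch rho ltac:(lia)) in A1, A2, A3, Hab.
    rewrite F1, F3, Rminus_diag in B1. rewrite F2 in B2. rewrite F3 in B3.
    destruct (final2 sg _ _ _ _ _ _ _ _ _ Hs A1 A2 A3 B1 B2 B3) as [G1 [G2 G3]].
    rewrite minus_INR in C1, C2, C3 by lia. simpl INR in C1, C2, C3.
    pose proof (Ht 1%nat ltac:(lia)) as T1.
    pose proof (Ht 2%nat ltac:(lia)) as T2.
    pose proof (Ht (2*rho+1)%nat ltac:(lia)) as T3.
    fold a in T2.
    apply (part2_trig (INR rho) (tau t 1) a (tau t (2*rho+1)%nat)).
    + apply (le_INR 1). lia.
    + exact T1.
    + exact T2.
    + lra.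
    + exact Hab.
    + unfold sg in *. nra.
    + unfold sg in *. nra.
    + unfold sg in *. nra.
Qed.
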